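(* Let $\mathcal{U}=[k]$ be finite, let $\{\mathbf{p}_u\}_{u\in\mathcal{U}}$ be a probability table with every $\mathbf{p}_u\in(0,1)^n$ and $\sum_i p_u^{(i)}=1$, let $d$ be a probability distribution on $\mathcal{U}$, and let $f_d(C^{(i)},C^{(j)})=\sum_{u}d(u)\,\frac{p_u^{(i)}}{p_u^{(i)}+p_u^{(j)}}$ for distinct $i,j$. For every cycle $\mathcal{C}=(c_1,\dots,c_\ell)$ of $\ell\ge3$ pairwise distinct indices in $[n]$, $$1<f_d(C^{(c_\ell)},C^{(c_1)})+\sum_{i=1}^{\ell-1}f_d(C^{(c_i)},C^{(c_{i+1})})<\ell-1.$$
   Context: $C^{(1)},\dots,C^{(n)}$ are class labels; $f_d$ are the overall opinions (edge-weights of the expert graph generated by the probability table and $d$); the displayed sum is the curl of the expert graph along $\mathcal{C}$. *)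

(* Defs.v *)
From mathcomp Require Import all_boot all_order all_algebra.
Set Implicit Arguments. Unset Strict Implicit. Unset Printing Implicit Defensive.
Import Order.TTheory GRing.Theory Num.Theory.
Local Open Scope ring_scope.

Definition prob_table (R : realFieldType) (k n : nat) (p : 'I_k -> 'I_n -> R) :=
  (forall u i, 0 < p u i < 1) /\ (forall u, \sum_(i < n) p u i = 1).

Definition prob_dist (R : realFieldType) (k : nat) (d : 'I_k -> R) :=
  (forall u, 0 <= d u) /\ \sum_(u < k) d u = 1.

Definition f_d (R : realFieldType) (k n : nat) (p : 'I_k -> 'I_n -> R)
  (d : 'I_k -> R) (i j : 'I_n) : R :=
  \sum_(u < k) d u * (p u i / (p u i + p u j)).

(* Curl along the cycle c_1,...,c_l (c : 'I_l -> 'I_n, 0-indexed): 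
   sum_{i<l} f_d(c_i, c_{(i+1) mod l}), which is the sum of the l-1 consecutive
   terms plus the closing term f_d(c_l, c_1). *)
Definition cycle_curl (R : realFieldType) (k n l : nat) (p : 'I_k -> 'I_n -> R)
  (d : 'I_k -> R) (c : nat -> 'I_n) : R :=
  \sum_(0 <= i < l) f_d p d (c i) (c ((i + 1) %% l)%N).

(* Main.v *)
Require Import Defs.
From mathcomp Require Import all_boot all_order all_algebra.
From mathcomp Require Import zify lra.
Import Order.TTheory GRing.Theory Num.Theory.
Local Open Scope ring_scope.

Lemma ordS_val l (j : 'I_l) : val (ordS j) = if (j.+1 == l)%N then 0%N else j.+1.
Proof.
rewrite /=; case: eqP => [->|ne]; first by rewrite modnn.
rewrite modn_small //; have := ltn_ord j; lia.
Qed.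

Lemma pair_lt (R : realFieldType) l (x : 'I_l -> R) : (3 <= l)%N -> (forall i, 0 < x i) ->
  forall i, x i + x (ordS i) < \sum_(j < l) x j.
Proof.
move=> l3 xp i.
have n1 : ordS i != i.
  apply/eqP=> /(congr1 val); rewrite ordS_val /=; have := ltn_ord i.
  move: (nat_of_ord i) => m; case: eqP; lia.
have n2 : ordS (ordS i) != i.
  apply/eqP=> /(congr1 val); rewrite !ordS_val /=; have := ltn_ord i.
  move: (nat_of_ord i) => m; case: (m.+1 =P l) => H; try case: eqP; lia.
have n3 : ordS (ordS i) != ordS i.
  apply/eqP=> /(congr1 val); rewrite ordS_val /=; have := ltn_ord (ordS i).
  move: (nat_of_ord (ordS i)) => m; case: eqP; lia.
rewrite (bigD1 i) //= (bigD1 (ordS i)) //= addrA ltrDl.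
rewrite (bigD1 (ordS (ordS i))) /=; last by rewrite n2 n3.
apply: ltr_pwDl; first exact: xp.
by apply: sumr_ge0 => j _; apply: ltW.
Qed.

Lemma key (R : realFieldType) l (x : 'I_l -> R) : (3 <= l)%N -> (forall i, 0 < x i) ->
  1 < \sum_(i < l) x i / (x i + x (ordS i)) /\
  1 < \sum_(i < l) x (ordS i) / (x i + x (ordS i)).
Proof.
move=> l3 xp.
set T := \sum_(j < l) x j.
have Tp : 0 < T.
  rewrite /T (bigD1 (Ordinal (leq_trans (isT : (0 < 3)%N) l3))) //=.
  by apply: ltr_pwDl => //; apply: sumr_ge0 => j _; apply: ltW.
have ord0l : (0 < l)%N by lia.
have hasl : has predT (index_enum 'I_l).
  by apply/hasP; exists (Ordinal ord0l) => //; rewrite mem_index_enum.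
have one : 1 = \sum_(i < l) x i / T.
  by rewrite -mulr_suml -/T divff // gt_eqF.
have one' : 1 = \sum_(i < l) x (ordS i) / T.
  have -> : \sum_(i < l) x (ordS i) / T = T / T.
    by rewrite -mulr_suml; congr (_ / _); rewrite /T; apply: esym; exact: (reindex_inj (@ordS_inj l)).
  by rewrite divff // gt_eqF.
split.
- rewrite one; apply: ltr_sum => // i _.
  rewrite ltr_pM2l // ltf_pV2 // ?posrE ?addr_gt0 //; exact: pair_lt.
- rewrite one'; apply: ltr_sum => // i _.
  rewrite ltr_pM2l // ltf_pV2 // ?posrE ?addr_gt0 //; exact: pair_lt.
Qed.

Lemma wpos (R : realFieldType) k (d g : 'I_k -> R) :
  prob_dist d -> (forall u, 0 < g u) -> 0 < \sum_(u < k) d u * g u.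
Proof.
move=> [d0 d1] gp.
have ge0 : forall u, 0 <= d u * g u by move=> u; rewrite mulr_ge0 // ltW.
rewrite lt0r sumr_ge0 ?andbT //; apply/eqP=> /(psumr_eq0P (fun u _ => ge0 u)) H.
have : \sum_(u < k) d u = 0.
  apply: big1 => u _; have := H u isT; move/eqP; rewrite mulf_eq0 (gt_eqF (gp u)) orbF.
  by move/eqP.
by rewrite d1 => /eqP; rewrite oner_eq0.
Qed.

Theorem corollary1 (R : realFieldType) (k n l : nat)
  (p : 'I_k -> 'I_n -> R) (d : 'I_k -> R) (c : nat -> 'I_n) :
  prob_table p -> prob_dist d ->
  (3 <= l)%N ->
  (forall i j, (i < l)%N -> (j < l)%N -> c i = c j -> i = j) ->
  1 < cycle_curl l p d c < (l%:R - 1).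
Proof.
move=> [pb _] pd l3 _.
set x := fun u (i : 'I_l) => p u (c i).
have xp : forall u i, 0 < x u i by move=> u i; have /andP[] := pb u (c i).
set S := fun u => \sum_(i < l) x u i / (x u i + x u (ordS i)).
have E : cycle_curl l p d c = \sum_(u < k) d u * S u.
  rewrite /cycle_curl big_mkord /f_d exchange_big /=; apply: eq_bigr => u _.
  rewrite /S mulr_sumr; apply: eq_bigr => i _.
  by rewrite /x /= addn1.
have dsum : \sum_(u < k) d u = 1 by case: pd.
have Sl : forall u, S u + \sum_(i < l) x u (ordS i) / (x u i + x u (ordS i)) = l%:R.
  move=> u; rewrite /S -big_split /=.
  rewrite (eq_bigr (fun _ => 1)) ?sumr_const ?card_ord // => i _.
  by rewrite -mulrDl divff // gt_eqF // addr_gt0.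
rewrite E; apply/andP; split.
- rewrite -subr_gt0 -[X in _ - X]dsum -sumrB.
  rewrite (eq_bigr (fun u => d u * (S u - 1))); last first.
    by move=> u _; rewrite mulrBr mulr1.
  apply: wpos => // u; rewrite subr_gt0; have [h _] := @key R l (x u) l3 (xp u); exact h.
- rewrite -subr_gt0 -[X in X - _]mulr1 -[X in _ * X]dsum mulr_sumr -sumrB.
  rewrite (eq_bigr (fun u => d u * (l%:R - 1 - S u))); last first.
    by move=> u _; rewrite mulrBr mulrC.
  apply: wpos => // u; have [_ h] := @key R l (x u) l3 (xp u).
  have := Sl u; lra.
Qed.
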